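(* Let $\mathcal{K}$ be a class of similar algebras and let $e$ be a unary term such that every algebra in $\mathcal{K}$ satisfies $e(e(x))=e(x)$ and is separated by $e$. Let $\mathcal{E}$ be the full subcategory of $\mathrm{ISP}(\mathcal{K})$ whose objects are the algebras in $\mathrm{ISP}(\mathcal{K})$ for which $e$ is dense. Then for an algebra $\mathbf{P}$ the following are equivalent: (a) $\mathbf{P}\in\mathcal{V}(\mathcal{K})$, $\mathbf{P}$ is projective in $\mathcal{V}(\mathcal{K})$, and $e$ is dense for $\mathbf{P}$; (b) $\mathbf{P}$ is an object of $\mathcal{E}$ and $\mathbf{P}$ is projective in $\mathcal{E}$.
   Context: $\mathcal{V}(\mathcal{K})$ is the variety generated by $\mathcal{K}$, and $\mathrm{ISP}(\mathcal{K})$ is the class of isomorphic copies of subalgebras of products of members of $\mathcal{K}$. A category of algebras is a full subcategory of the category of all algebras of a given language. If $\mathcal{P}$ is a category of algebras, $\mathbf{P}\in\mathcal{P}$ is projective in $\mathcal{P}$ if for all $\mathbf{A},\mathbf{B}\in\mathcal{P}$, every surjective homomorphism $\sigma:\mathbf{A}\to\mathbf{B}$ and every homomorphism $\varphi:\mathbf{P}\to\mathbf{B}$, there is a homomorphism $\bar\varphi:\mathbf{P}\to\mathbf{A}$ with $\sigma\circ\bar\varphi=\varphi$. The term $e$ separates $\mathbf{A}$ if for all $a\neq b$ in $A$ there is a unary term $g$ with $e(g(a))\neq e(g(b))$; $e$ is dense for $\mathbf{A}$ if $\mathbf{A}$ is generated by $e(A)$. *)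

(* Defs.v *)
From mathcomp Require Import all_boot.
Set Implicit Arguments. Unset Strict Implicit. Unset Printing Implicit Defensive.

Record signature := Signature { ops : Type; arity : ops -> nat }.

Record algebra (S : signature) := Algebra {
  carrier :> Type;
  interp : forall f : ops S, ('I_(arity f) -> carrier) -> carrier }.
Arguments interp {S} a f _.

Section UA.
Variable S : signature.

(** Homomorphisms (full subcategories: every homomorphism is a morphism). *)
Definition is_hom (A B : algebra S) (h : A -> B) : Prop :=
  forall (f : ops S) (args : 'I_(arity f) -> A),
    h (interp A f args) = interp B f (fun i => h (args i)).

Definition surjective (A B : Type) (h : A -> B) : Prop :=
  forall b, exists a, h a = b.

Definition prod_alg (I : Type) (F : I -> algebra S) : algebra S :=
  @Algebra S (forall i, F i)
    (fun f args => fun i => interp (F i) f (fun j => args j i)).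

(** ISP(K): isomorphic copies of subalgebras of products of members of K,
    i.e. algebras embedding (injective homomorphism) into such a product. *)
Definition ISP (K : algebra S -> Prop) (A : algebra S) : Prop :=
  exists (I : Type) (F : I -> algebra S), (forall i, K (F i)) /\
  exists h : A -> prod_alg F, is_hom (B := prod_alg F) h /\ injective h.

(** V(K) = HSP(K) = H(ISP(K)) (variety generated by K, Tarski/Birkhoff). *)
Definition variety_gen (K : algebra S -> Prop) (A : algebra S) : Prop :=
  exists (B : algebra S) (h : B -> A), ISP K B /\ is_hom h /\ surjective h.

Inductive term (X : Type) : Type :=
| Var : X -> term X
| App : forall f : ops S, ('I_(arity f) -> term X) -> term X.

Fixpoint eval (X : Type) (A : algebra S) (v : X -> A) (t : term X) : A :=
  match t with
  | Var x => v x
  | App f ts => interp A f (fun i => eval v (ts i))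
  end.

Definition unary_term := term unit.
Definition term_op (e : unary_term) (A : algebra S) (a : A) : A :=
  eval (fun _ => a) e.
Arguments term_op e A a : clear implicits.

Definition separates (e : unary_term) (A : algebra S) : Prop :=
  forall a b : A, a <> b ->
    exists g : unary_term, term_op e A (term_op g A a) <> term_op e A (term_op g A b).

Definition subuniverse (A : algebra S) (B : A -> Prop) : Prop :=
  forall (f : ops S) (args : 'I_(arity f) -> A),
    (forall i, B (args i)) -> B (interp A f args).

Definition generated_by (A : algebra S) (X : A -> Prop) : Prop :=
  forall B : A -> Prop, subuniverse B -> (forall x, X x -> B x) -> forall x, B x.

Definition dense (e : unary_term) (A : algebra S) : Prop :=
  generated_by (fun x => exists a : A, x = term_op e A a).

Definition projective_in (C : algebra S -> Prop) (P : algebra S) : Prop :=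
  C P /\
  forall (A B : algebra S) (sigma : A -> B) (phi : P -> B),
    C A -> C B -> is_hom sigma -> surjective sigma -> is_hom phi ->
    exists phibar : P -> A, is_hom phibar /\ forall x, sigma (phibar x) = phi x.

End UA.

Arguments term_op {S} e A a.
Arguments unary_term S : clear implicits.

(* Main.v *)
Require Import Defs.
From mathcomp Require Import all_boot.
From Stdlib Require Import ProofIrrelevance FunctionalExtensionality IndefiniteDescription.
Set Implicit Arguments. Unset Strict Implicit.

Section Helpers.
Variable S : signature.

Lemma hom_eval (A B : algebra S) (h : A -> B) (X : Type) (v : X -> A) (t : term S X) :
  is_hom h -> h (eval v t) = eval (fun x => h (v x)) t.
Proof.
move=> hh; elim: t => [x|f ts IH] //=.
rewrite hh; congr (interp B f); apply: functional_extensionality => i; exact: IH.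
Qed.

Lemma hom_term (A B : algebra S) (h : A -> B) (t : unary_term S) (a : A) :
  is_hom h -> h (term_op t A a) = term_op t B (h a).
Proof. move=> hh; rewrite /term_op hom_eval //. Qed.

Lemma comp_hom (A B C : algebra S) (g : A -> B) (h : B -> C) :
  is_hom g -> is_hom h -> is_hom (fun x => h (g x)).
Proof. by move=> hg hh f args; rewrite hg hh. Qed.

Lemma id_hom (A : algebra S) : is_hom (fun x : A => x).
Proof. by []. Qed.

Lemma proj_hom (I : Type) (F : I -> algebra S) (i : I) :
  is_hom (A := prod_alg F) (B := F i) (fun x => x i).
Proof. by []. Qed.

Lemma prod_term (I : Type) (F : I -> algebra S) (i : I) (t : unary_term S) (x : prod_alg F) :
  term_op t (prod_alg F) x i = term_op t (F i) (x i).
Proof. exact (hom_term t x (proj_hom (F:=F) i)). Qed.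

Lemma ISP_idem (K : algebra S -> Prop) (e : unary_term S) :
  (forall A, K A -> forall a : A, term_op e A (term_op e A a) = term_op e A a) ->
  forall A, ISP K A -> forall a : A, term_op e A (term_op e A a) = term_op e A a.
Proof.
move=> He A [I [F [KF [h [hh hinj]]]]] a; apply: hinj.
rewrite !(hom_term _ _ hh). apply: functional_extensionality_dep => i.
rewrite !prod_term. exact: He.
Qed.

Definition pair_alg (X Y : algebra S) : algebra S :=
  @Algebra S (X * Y)%type
    (fun f args => (interp X f (fun i => (args i).1), interp Y f (fun i => (args i).2))).

Lemma fst_hom X Y : is_hom (A := pair_alg X Y) (B := X) (fun p : X * Y => p.1).
Proof. by []. Qed.
Lemma snd_hom X Y : is_hom (A := pair_alg X Y) (B := Y) (fun p : X * Y => p.2).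
Proof. by []. Qed.

Definition gen (A : algebra S) (X : A -> Prop) (x : A) : Prop :=
  forall T : A -> Prop, subuniverse T -> (forall z, X z -> T z) -> T x.

Lemma gen_sub (A : algebra S) (X : A -> Prop) : subuniverse (gen X).
Proof. move=> f args Hargs T HT HX; apply: (HT) => i; exact: (Hargs i T HT HX). Qed.

Definition sub_alg (A : algebra S) (B : A -> Prop) (HB : subuniverse B) : algebra S :=
  @Algebra S {x : A | B x}
    (fun f args => exist B (interp A f (fun i => proj1_sig (args i)))
                     (HB f _ (fun i => proj2_sig (args i)))).

Lemma val_hom (A : algebra S) (B : A -> Prop) (HB : subuniverse B) :
  is_hom (A := sub_alg HB) (B := A) (fun y => proj1_sig y).
Proof. by []. Qed.

Lemma val_inj (A : algebra S) (B : A -> Prop) (HB : subuniverse B) :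
  injective (fun y : sub_alg HB => proj1_sig y).
Proof.
move=> [x hx] [y hy] /= E; subst; congr exist; apply: proof_irrelevance.
Qed.

Lemma ISP_inj (K : algebra S -> Prop) (Z X : algebra S) (g : Z -> X) :
  is_hom g -> injective g -> ISP K X -> ISP K Z.
Proof.
move=> hg ig [I [F [KF [h [hh ih]]]]]; exists I, F; split=> //.
exists (fun z => h (g z)); split; first exact: comp_hom.
by move=> a b /ih /ig.
Qed.

Lemma ISP_pair (K : algebra S -> Prop) (X Y : algebra S) : ISP K X -> ISP K Y -> ISP K (pair_alg X Y).
Proof.
move=> [I1 [F1 [K1 [h1 [hh1 ih1]]]]] [I2 [F2 [K2 [h2 [hh2 ih2]]]]].
pose G := fun i : I1 + I2 => match i with inl a => F1 a | inr b => F2 b end.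
exists (I1 + I2)%type, G; split; first by case.
exists (fun p : X * Y => fun i => match i as i0 return G i0 with
                       inl a => h1 p.1 a | inr b => h2 p.2 b end); split.
  move=> f args; apply: functional_extensionality_dep => -[a|b] /=.
    by rewrite hh1.
  by rewrite hh2.
move=> [x y] [x' y'] E.
have E1 : h1 x = h1 x'.
  apply: functional_extensionality_dep => a; exact: (f_equal (fun k => k (inl a)) E).
have E2 : h2 y = h2 y'.
  apply: functional_extensionality_dep => a; exact: (f_equal (fun k => k (inr a)) E).
by rewrite (ih1 _ _ E1) (ih2 _ _ E2).
Qed.

Lemma lift_lemma (K : algebra S -> Prop) (e : unary_term S)
  (He_idem : forall A, K A -> forall a : A, term_op e A (term_op e A a) = term_op e A a)
  (P A B : algebra S) (sigma : A -> B) (phi : P -> B) :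
  ISP K P -> dense e P -> projective_in (fun X => ISP K X /\ dense e X) P ->
  ISP K A -> is_hom sigma -> surjective sigma -> is_hom phi ->
  exists psi : P -> A, is_hom psi /\ forall x, sigma (psi x) = phi x.
Proof.
move=> IP dP [_ Hproj] IA hsig ssig hphi.
pose D := pair_alg P A.
pose Cp := fun c : D => phi c.1 = sigma c.2.
pose X := fun z : D => exists c : D, Cp c /\ z = term_op e D c.
have eD1 : forall c : D, (term_op e D c).1 = term_op e P c.1.
  move=> c; exact (hom_term e c (fst_hom (X:=P) (Y:=A))).
have eD2 : forall c : D, (term_op e D c).2 = term_op e A c.2.
  move=> c; exact (hom_term e c (snd_hom (X:=P) (Y:=A))).
have ID : ISP K D by exact: ISP_pair.
have idemD := ISP_idem He_idem ID.
have subC : subuniverse Cp.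
  move=> f args H; rewrite /Cp /= hphi hsig; congr (interp B f).
  apply: functional_extensionality => i; exact: H.
have XC : forall z, X z -> Cp z.
  move=> z [c [Hc ->]]; rewrite /Cp eD1 eD2 (hom_term _ _ hphi) (hom_term _ _ hsig).
  by rewrite Hc.
have genC : forall z, gen X z -> Cp z by move=> z Hz; exact: (Hz Cp subC XC).
have genX : forall z, X z -> gen X z by move=> z Hz T _ HX; exact: HX.
pose C' := sub_alg (@gen_sub D X).
have IC : ISP K C' := ISP_inj (val_hom (HB:=@gen_sub D X)) (val_inj (HB:=@gen_sub D X)) ID.
have dC : dense e C'.
  move=> T HT HeT y.
  pose T' := fun x : D => gen X x /\ forall H : gen X x, T (exist _ x H).
  suff : T' (proj1_sig y) by case: y => x hx /= [_]; apply.
  apply: (proj2_sig y).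
    move=> f args Hargs; split; first by apply: gen_sub => i; case: (Hargs i).
    move=> H.
    have := HT f (fun i => exist _ (args i) (proj1 (Hargs i))) (fun i => proj2 (Hargs i) _).
    suff -> : exist _ (interp D f args) H =
              interp C' f (fun i => exist _ (args i) (proj1 (Hargs i))) by [].
    by apply: (val_inj (HB:=@gen_sub D X)).
  move=> z Xz; split; first exact: genX.
  move=> H; apply: HeT; exists (exist _ z H).
  apply: (val_inj (HB:=@gen_sub D X)) => /=.
  have -> := hom_term e (exist _ z H : C') (val_hom (HB:=@gen_sub D X)); rewrite /=.
  case: Xz => c [_ ->]; by rewrite idemD.
have hpi : is_hom (A := C') (B := P) (fun y => (proj1_sig y).1) by [].
have spi : surjective (fun y : C' => (proj1_sig y).1).
  move=> p; apply: (dP (fun p => exists y : C', (proj1_sig y).1 = p)).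
    move=> f args Hargs.
    pose g := fun i => proj1_sig (constructive_indefinite_description _ (Hargs i)).
    exists (interp C' f g) => /=; congr (interp P f).
    apply: functional_extensionality => i.
    exact: (proj2_sig (constructive_indefinite_description _ (Hargs i))).
  move=> x [p0 ->].
  have [a Ha] := ssig (phi p0).
  have Xc : X (term_op e D ((p0, a) : D)) by exists (p0, a); split => //; rewrite /Cp Ha.
  exists (exist _ _ (genX _ Xc)) => /=; by rewrite eD1.
have [s [hs Hs]] := Hproj C' P _ (fun x => x) (conj IC dC) (conj IP dP) hpi spi (id_hom (A:=P)).
exists (fun x => (proj1_sig (s x)).2); split.
  move=> f args /=; by rewrite hs.
move=> x; have := genC _ (proj2_sig (s x)); rewrite /Cp => <-; by rewrite Hs.
Qed.

End Helpers.

Theorem theorem4p1 (S : signature) (K : algebra S -> Prop) (e : unary_term S)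
  (He_idem : forall A, K A -> forall a : A, term_op e A (term_op e A a) = term_op e A a)
  (He_sep : forall A, K A -> separates e A)
  (P : algebra S) :
  let E := fun A => ISP K A /\ dense e A in
  (variety_gen K P /\ projective_in (variety_gen K) P /\ dense e P)
  <-> (E P /\ projective_in E P).
Proof.
move=> E.
have ISPV : forall A, ISP K A -> variety_gen K A.
  move=> A IA; exists A, (fun x => x); split => //; split; first exact: id_hom.
  by move=> b; exists b.
split.
  move=> [VP [[_ HP] dP]].
  have IP : ISP K P.
    case: VP => B [h [IB [hh sh]]].
    have VPP : variety_gen K P by exists B, h.
    have [s [hs Hs]] := HP B P h (fun x => x) (ISPV _ IB) VPP hh sh (id_hom (A:=P)).
    apply: (ISP_inj hs _ IB) => x y Exy.
    by rewrite -(Hs x) -(Hs y) Exy.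
  split; first by split.
  split; first by split.
  move=> A B sigma phi [IA _] [IB _]; exact: HP (ISPV _ IA) (ISPV _ IB).
move=> [[IP dP] HP]; split; first exact: ISPV.
split; last exact: dP.
split; first exact: ISPV.
move=> A B sigma phi [A' [q [IA' [hq sq]]]] _ hsig ssig hphi.
have sqs : surjective (fun x => sigma (q x)).
  move=> b; have [a <-] := ssig b; have [a' <-] := sq a; by exists a'.
have [psi [hpsi Hpsi]] := lift_lemma He_idem (sigma := fun x => sigma (q x)) (phi := phi) IP dP HP IA'
  (comp_hom hq hsig) sqs hphi.
exists (fun x => q (psi x)); split; first exact: comp_hom.
exact: Hpsi.
Qed.
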